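(* Let $s\ge0$. There is $C=C(s)$, independent of $M>0$ and $T>0$, such that for all $\omega,\tilde\omega\in C([0,T];\ell^2_s(\mathbb Z))$, $$\|\mathcal N_R[\omega]\|_{C_T\ell^2_s}\le CM\|\omega\|_{C_T\ell^2_s}^3,\qquad \|\mathcal N_R[\omega]-\mathcal N_R[\tilde\omega]\|_{C_T\ell^2_s}\le CM\big(\|\omega\|_{C_T\ell^2_s}^2+\|\tilde\omega\|_{C_T\ell^2_s}^2\big)\|\omega-\tilde\omega\|_{C_T\ell^2_s}.$$
   Context: $\langle n\rangle=(1+n^2)^{1/2}$, $\|\omega\|_{\ell^2_s}=\|\langle\cdot\rangle^s\omega\|_{\ell^2}$, $C_T\ell^2_s:=C([0,T];\ell^2_s(\mathbb Z))$ with norm $\sup_{t\in[0,T]}\|\omega(t)\|_{\ell^2_s}$, $\omega^*(n):=\overline{\omega(-n)}$. Notation $n_{ij\ldots}=n_i+n_j+\cdots$, $\hat n:=n-i\mathbf 1_{\{n=0\}}$; for $n=n_{123}$: $m_1:=2i\frac{nn_{23}}{\hat n_1\hat n_2}\mathbf 1_{\{n>0\}}\mathbf 1_{\{n_{23}<0\}}\mathbf 1_{\{n_3\ne0\}}$, $\tilde m_1:=m_1\mathbf 1_{\{n_{12}n_{13}\ne0\}}$, $\Phi:=n|n|-n_1|n_1|-n_2|n_2|-n_3|n_3|$. For $M>0$, $t\in[0,T]$: $$\mathcal N_R[\omega](t,n):=\sum_{n=n_{123},\ |\Phi|\le M}e^{it\Phi}\tilde m_1(n,n_1,n_2,n_3)\,\omega(t,n_1)\omega(t,n_2)\omega^*(t,n_3)\quad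 (n>0),$$ and $\mathcal N_R[\omega](t,n):=0$ for $n\le0$. *)

(* Defs.v *)
From Stdlib Require Import Reals ZArith List.
Open Scope R_scope.

Definition Cx : Type := (R * R)%type.
Definition C0 : Cx := (0, 0).
Definition Cadd (z w : Cx) : Cx := (fst z + fst w, snd z + snd w).
Definition Copp (z : Cx) : Cx := (- fst z, - snd z).
Definition Csub (z w : Cx) : Cx := Cadd z (Copp w).
Definition Cmul (z w : Cx) : Cx :=
  (fst z * fst w - snd z * snd w, fst z * snd w + snd z * fst w).
Definition Cconj (z : Cx) : Cx := (fst z, - snd z).
Definition Cnorm2 (z : Cx) : R := fst z * fst z + snd z * snd z.
Definition Cinv (z : Cx) : Cx := (fst z / Cnorm2 z, - snd z / Cnorm2 z).
Definition Cexpi (x : R) : Cx := (cos x, sin x).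

Definition zrange (K : nat) : list Z :=
  map (fun k => (Z.of_nat k - Z.of_nat K)%Z) (seq 0 (2 * K + 1)).
Definition zsum (K : nat) (f : Z -> R) : R := fold_right Rplus 0 (map f (zrange K)).
Definition Czsum (K : nat) (f : Z -> Cx) : Cx := fold_right Cadd C0 (map f (zrange K)).

Definition jbr2s (s : R) (n : Z) : R := Rpower (1 + IZR n ^ 2) s.

(* l2s_le s v A  <->  ||v||_{l^2_s} <= A  (in particular v in l^2_s):
   every partial sum of sum_n <n>^{2s} |v n|^2 is <= A^2. *)
Definition l2s_le (s : R) (v : Z -> Cx) (A : R) : Prop :=
  0 <= A /\ forall K : nat, zsum K (fun n => jbr2s s n * Cnorm2 (v n)) <= A ^ 2.

Definition in_CTl2s (s T : R) (w : R -> Z -> Cx) : Prop :=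
  (forall t, 0 <= t <= T -> exists A, l2s_le s (w t) A) /\
  (forall t, 0 <= t <= T -> forall eps, 0 < eps ->
     exists delta, 0 < delta /\
       forall t', 0 <= t' <= T -> Rabs (t' - t) < delta ->
         l2s_le s (fun n => Csub (w t' n) (w t n)) eps).

Definition star (v : Z -> Cx) (n : Z) : Cx := Cconj (v (- n)%Z).

Definition hatn (n : Z) : Cx := if Z.eqb n 0 then (0, -1) else (IZR n, 0).

Definition m1 (n n1 n2 n3 : Z) : Cx :=
  if (Z.ltb 0 n && Z.ltb (n2 + n3) 0 && negb (Z.eqb n3 0))%bool
  then Cmul (0, 2 * IZR (n * (n2 + n3))) (Cinv (Cmul (hatn n1) (hatn n2)))
  else C0.

Definition mt1 (n n1 n2 n3 : Z) : Cx :=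
  if Z.eqb ((n1 + n2) * (n1 + n3)) 0 then C0 else m1 n n1 n2 n3.

Definition Phi (n n1 n2 n3 : Z) : Z :=
  (n * Z.abs n - n1 * Z.abs n1 - n2 * Z.abs n2 - n3 * Z.abs n3)%Z.

Definition NR_term (M t : R) (v : Z -> Cx) (n n1 n2 : Z) : Cx :=
  let n3 := (n - n1 - n2)%Z in
  if Rle_dec (Rabs (IZR (Phi n n1 n2 n3))) M
  then Cmul (Cexpi (t * IZR (Phi n n1 n2 n3)))
         (Cmul (mt1 n n1 n2 n3) (Cmul (v n1) (Cmul (v n2) (star v n3))))
  else C0.

Definition NR_partial (M t : R) (v : Z -> Cx) (n : Z) (K : nat) : Cx :=
  Czsum K (fun n1 => Czsum K (fun n2 => NR_term M t v n n1 n2)).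

Definition Cx_cv (u : nat -> Cx) (l : Cx) : Prop :=
  Un_cv (fun K => fst (u K)) (fst l) /\ Un_cv (fun K => snd (u K)) (snd l).

Definition is_NR (M T : R) (w : R -> Z -> Cx) (N : R -> Z -> Cx) : Prop :=
  forall t, 0 <= t <= T -> forall n : Z,
    ((0 < n)%Z -> Cx_cv (NR_partial M t (w t) n) (N t n)) /\
    ((n <= 0)%Z -> N t n = C0).

(* Main.v *)
Require Import Defs.
From Stdlib Require Import Reals ZArith List Lra Lia Psatz ClassicalEpsilon.
Open Scope R_scope.

Fixpoint isum (a : Z) (n : nat) (f : Z -> R) : R :=
  match n with O => 0 | S k => f a + isum (a + 1)%Z k f end.

Lemma isum_ext a n f g : (forall i, (a <= i < a + Z.of_nat n)%Z -> f i = g i) ->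
  isum a n f = isum a n g.
Proof.
  revert a; induction n as [|n IH]; intros a H; simpl; auto.
  rewrite (H a) by lia. rewrite (IH (a+1)%Z); auto. intros i Hi; apply H; lia.
Qed.

Lemma isum_le a n f g : (forall i, (a <= i < a + Z.of_nat n)%Z -> f i <= g i) ->
  isum a n f <= isum a n g.
Proof.
  revert a; induction n as [|n IH]; intros a H; simpl; [lra|].
  pose proof (H a ltac:(lia)). pose proof (IH (a+1)%Z ltac:(intros i Hi; apply H; lia)). lra.
Qed.

Lemma isum_nonneg a n f : (forall i, 0 <= f i) -> 0 <= isum a n f.
Proof.
  intro H; revert a; induction n as [|n IH]; intros a; simpl; [lra|].
  pose proof (H a). pose proof (IH (a+1)%Z). lra.
Qed.

Lemma isum_plus a n f g : isum a n (fun i => f i + g i) = isum a n f + isum a n g.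
Proof. revert a; induction n as [|n IH]; intros a; simpl; [lra|]. rewrite IH. lra. Qed.

Lemma isum_minus a n f g : isum a n (fun i => f i - g i) = isum a n f - isum a n g.
Proof. revert a; induction n as [|n IH]; intros a; simpl; [lra|]. rewrite IH. lra. Qed.

Lemma isum_scal a n c f : isum a n (fun i => c * f i) = c * isum a n f.
Proof. revert a; induction n as [|n IH]; intros a; simpl; [lra|]. rewrite IH. lra. Qed.

Lemma isum_0 a n : isum a n (fun _ => 0) = 0.
Proof. revert a; induction n as [|n IH]; intros a; simpl; [lra|]. rewrite IH. lra. Qed.

Lemma isum_split a p q f : isum a (p + q) f = isum a p f + isum (a + Z.of_nat p) q f.
Proof.
  revert a; induction p as [|p IH]; intros a; simpl.
  - replace (a + 0)%Z with a by lia. lra.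
  - rewrite IH. replace (a + 1 + Z.of_nat p)%Z with (a + Z.pos (Pos.of_succ_nat p))%Z by lia. lra.
Qed.

Lemma isum_S_r a n f : isum a (S n) f = isum a n f + f (a + Z.of_nat n)%Z.
Proof. replace (S n) with (n + 1)%nat by lia. rewrite isum_split. simpl. lra. Qed.

Lemma isum_shift a n c f : isum a n (fun x => f (x + c)%Z) = isum (a + c) n f.
Proof.
  revert a; induction n as [|n IH]; intros a; simpl; auto.
  rewrite IH. replace (a + 1 + c)%Z with (a + c + 1)%Z by lia. reflexivity.
Qed.

Lemma isum_refl a n c f : isum a n (fun x => f (c - x)%Z) = isum (c - (a + Z.of_nat n) + 1) n f.
Proof.
  revert a; induction n as [|n IH]; intros a; [reflexivity|].
  change (isum a (S n) (fun x => f (c - x)%Z)) with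
    (f (c - a)%Z + isum (a+1) n (fun x => f (c - x)%Z)). rewrite IH.
  rewrite (isum_S_r (c - (a + Z.of_nat (S n)) + 1) n f).
  replace (c - (a + Z.of_nat (S n)) + 1 + Z.of_nat n)%Z with (c - a)%Z by lia.
  replace (c - (a + 1 + Z.of_nat n) + 1)%Z with (c - (a + Z.of_nat (S n)) + 1)%Z by lia.
  lra.
Qed.

Lemma isum_swap a n b m (f : Z -> Z -> R) :
  isum a n (fun i => isum b m (fun j => f i j)) = isum b m (fun j => isum a n (fun i => f i j)).
Proof.
  revert a; induction n as [|n IH]; intros a; simpl.
  - rewrite isum_0; reflexivity.
  - rewrite IH. rewrite <- isum_plus. reflexivity.
Qed.

Lemma isum_single a n f i : (forall x, 0 <= f x) -> (a <= i < a + Z.of_nat n)%Z -> f i <= isum a n f.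
Proof.
  intros Hf Hi.
  replace n with (Z.to_nat (i - a) + (1 + (n - Z.to_nat (i - a) - 1)))%nat by lia.
  rewrite isum_split, isum_split. simpl.
  replace (a + Z.of_nat (Z.to_nat (i - a)))%Z with i by lia.
  pose proof (isum_nonneg a (Z.to_nat (i - a)) f Hf).
  pose proof (isum_nonneg (i+1) (n - Z.to_nat (i - a) - 1) f Hf). lra.
Qed.

Lemma discr P Q R0 : 0 <= P -> (forall t, 0 <= t*t*P - 2*t*R0 + Q) -> R0*R0 <= P*Q.
Proof.
  intros HP H.
  destruct (Req_dec P 0) as [E|E].
  - subst. assert (R0 = 0).
    { destruct (Req_dec R0 0) as [h|h]; auto.
      pose proof (H ((Q+1)/(2*R0))) as H0.
      assert (2 * ((Q+1)/(2*R0)) * R0 = Q + 1) by (field; lra).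
      pose proof (H 0). lra. }
    subst; lra.
  - pose proof (H (R0/P)).
    assert (R0/P*(R0/P)*P - 2*(R0/P)*R0 + Q = Q - R0*R0/P) by (field; lra).
    rewrite H1 in H0.
    assert (R0*R0/P <= Q) by lra.
    apply Rmult_le_compat_l with (r := P) in H2; [|lra].
    replace (P * (R0*R0/P)) with (R0*R0) in H2 by (field; lra). lra.
Qed.

Lemma CS a n f g : (isum a n (fun i => f i * g i))^2 <= isum a n (fun i => f i ^2) * isum a n (fun i => g i^2).
Proof.
  rewrite <- Rsqr_pow2; unfold Rsqr.
  apply discr. apply isum_nonneg; intros; apply pow2_ge_0.
  intros t.
  assert (0 <= isum a n (fun i => (t * f i - g i)^2)) by (apply isum_nonneg; intros; apply pow2_ge_0).
  replace (isum a n (fun i => (t * f i - g i)^2)) with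
    (isum a n (fun i => (t*t) * (f i ^2) + ((- (2*t)) * (f i * g i) + g i ^2))) in H.
  2:{ apply isum_ext; intros; ring. }
  rewrite isum_plus, isum_scal, isum_plus, isum_scal in H. simpl in *. lra.
Qed.

Lemma CS2 a n b m (f g : Z -> Z -> R) :
  (isum a n (fun i => isum b m (fun j => f i j * g i j)))^2 <=
  isum a n (fun i => isum b m (fun j => f i j ^2)) * isum a n (fun i => isum b m (fun j => g i j^2)).
Proof.
  rewrite <- Rsqr_pow2; unfold Rsqr.
  apply discr. apply isum_nonneg; intros; apply isum_nonneg; intros; apply pow2_ge_0.
  intros t.
  assert (0 <= isum a n (fun i => isum b m (fun j => (t * f i j - g i j)^2))) by
    (apply isum_nonneg; intros; apply isum_nonneg; intros; apply pow2_ge_0).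
  replace (isum a n (fun i => isum b m (fun j => (t * f i j - g i j)^2))) with
    (isum a n (fun i => (t*t) * isum b m (fun j => f i j ^2) + ((- (2*t)) * isum b m (fun j => f i j * g i j) + isum b m (fun j => g i j ^2)))) in H.
  2:{ apply isum_ext; intros. rewrite <- !isum_scal, <- !isum_plus. apply isum_ext; intros; ring. }
  rewrite isum_plus, isum_scal, isum_plus, isum_scal in H. simpl in *. lra.
Qed.

Lemma zsum_gen f c j m : fold_right Rplus 0 (map f (map (fun k => (Z.of_nat k - c)%Z) (seq j m)))
  = isum (Z.of_nat j - c) m f.
Proof.
  revert j; induction m as [|m IH]; intros j; simpl; auto.
  rewrite IH. f_equal. f_equal. lia.
Qed.

Lemma zsum_isum K f : zsum K f = isum (- Z.of_nat K) (2 * K + 1) f.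
Proof. unfold zsum, zrange. rewrite zsum_gen. f_equal. Qed.

Lemma fst_Czsum K f : fst (Czsum K f) = zsum K (fun x => fst (f x)).
Proof. unfold Czsum, zsum. induction (zrange K); simpl; auto. rewrite IHl; auto. Qed.
Lemma snd_Czsum K f : snd (Czsum K f) = zsum K (fun x => snd (f x)).
Proof. unfold Czsum, zsum. induction (zrange K); simpl; auto. rewrite IHl; auto. Qed.

Definition Bnd (f : Z -> R) (X : R) : Prop := forall a n, isum a n f <= X.

Lemma Bnd_of_zsum f X : (forall x, 0 <= f x) -> (forall K, zsum K f <= X) -> Bnd f X.
Proof.
  intros Hf H a n.
  set (K := (Z.to_nat (Z.abs a) + n)%nat).
  specialize (H K). rewrite zsum_isum in H.
  replace (2 * K + 1)%nat with (Z.to_nat (a + Z.of_nat K) + (n + (2*K+1 - Z.to_nat (a + Z.of_nat K) - n)))%nat in H by lia.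
  rewrite isum_split, isum_split in H.
  replace (- Z.of_nat K + Z.of_nat (Z.to_nat (a + Z.of_nat K)))%Z with a in H by lia.
  pose proof (isum_nonneg (- Z.of_nat K) (Z.to_nat (a + Z.of_nat K)) f Hf).
  pose proof (isum_nonneg (a + Z.of_nat n) (2 * K + 1 - Z.to_nat (a + Z.of_nat K) - n) f Hf).
  lra.
Qed.

Lemma Bnd_shift f X c : Bnd f X -> Bnd (fun x => f (x + c)%Z) X.
Proof. intros H a n. rewrite isum_shift. apply H. Qed.

Lemma Bnd_refl f X c : Bnd f X -> Bnd (fun x => f (c - x)%Z) X.
Proof. intros H a n. rewrite isum_refl. apply H. Qed.

Lemma isum_S_l a n f : isum a (S n) f = f a + isum (a + 1)%Z n f.
Proof. reflexivity. Qed.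

Lemma zsum_S K f : zsum (S K) f = f (- Z.of_nat (S K))%Z + zsum K f + f (Z.of_nat (S K)).
Proof.
  rewrite !zsum_isum.
  replace (2 * S K + 1)%nat with (S (S (2 * K + 1))) by lia.
  rewrite isum_S_r. rewrite isum_S_l.
  replace (- Z.of_nat (S K) + 1)%Z with (- Z.of_nat K)%Z by lia.
  replace (- Z.of_nat (S K) + Z.of_nat (S (2 * K + 1)))%Z with (Z.of_nat (S K)) by lia.
  lra.
Qed.

Lemma zsum_ext K f g : (forall x, (Z.abs x <= Z.of_nat K)%Z -> f x = g x) -> zsum K f = zsum K g.
Proof. intros H. rewrite !zsum_isum. apply isum_ext. intros; apply H; lia. Qed.

Lemma zsum_le K f g : (forall x, (Z.abs x <= Z.of_nat K)%Z -> f x <= g x) -> zsum K f <= zsum K g.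
Proof. intros H. rewrite !zsum_isum. apply isum_le. intros; apply H; lia. Qed.

Lemma zsum_nonneg K f : (forall x, 0 <= f x) -> 0 <= zsum K f.
Proof. intros H. rewrite zsum_isum. apply isum_nonneg; auto. Qed.

Lemma zsum_chi K f : zsum (S K) (fun x => if (Z.abs x <=? Z.of_nat K)%Z then f x else 0) = zsum K f.
Proof.
  rewrite zsum_S.
  replace ((Z.abs (- Z.of_nat (S K)) <=? Z.of_nat K)%Z) with false by (symmetry; apply Z.leb_gt; lia).
  replace ((Z.abs (Z.of_nat (S K)) <=? Z.of_nat K)%Z) with false by (symmetry; apply Z.leb_gt; lia).
  rewrite (zsum_ext K _ f). lra.
  intros x Hx. replace (Z.abs x <=? Z.of_nat K)%Z with true by (symmetry; apply Z.leb_le; lia). auto.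
Qed.

Lemma zsum_mono K f : (forall x, 0 <= f x) -> zsum K f <= zsum (S K) f.
Proof. intros H. rewrite zsum_S. pose proof (H (- Z.of_nat (S K))%Z). pose proof (H (Z.of_nat (S K))). lra. Qed.

Lemma zsum_single K f x : (forall x, 0 <= f x) -> (Z.abs x <= Z.of_nat K)%Z -> f x <= zsum K f.
Proof. intros H Hx. rewrite zsum_isum. apply isum_single; auto; lia. Qed.

Lemma zsum_plus K f g : zsum K (fun i => f i + g i) = zsum K f + zsum K g.
Proof. rewrite !zsum_isum. apply isum_plus. Qed.
Lemma zsum_minus K f g : zsum K (fun i => f i - g i) = zsum K f - zsum K g.
Proof. rewrite !zsum_isum. apply isum_minus. Qed.
Lemma zsum_scal K c f : zsum K (fun i => c * f i) = c * zsum K f.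
Proof. rewrite !zsum_isum. apply isum_scal. Qed.

Definition cabs (z : Cx) : R := sqrt (Cnorm2 z).

Lemma Cnorm2_nonneg z : 0 <= Cnorm2 z.
Proof. unfold Cnorm2. nra. Qed.

Lemma cabs_nonneg z : 0 <= cabs z.
Proof. apply sqrt_pos. Qed.

Lemma cabs_sq z : cabs z ^ 2 = Cnorm2 z.
Proof. unfold cabs. rewrite <- Rsqr_pow2. apply Rsqr_sqrt. apply Cnorm2_nonneg. Qed.

Lemma Cnorm2_mul z w : Cnorm2 (Cmul z w) = Cnorm2 z * Cnorm2 w.
Proof. destruct z, w; unfold Cnorm2, Cmul; simpl; ring. Qed.

Lemma cabs_mul z w : cabs (Cmul z w) = cabs z * cabs w.
Proof. unfold cabs. rewrite Cnorm2_mul. apply sqrt_mult; apply Cnorm2_nonneg. Qed.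

Lemma Cnorm2_conj z : Cnorm2 (Cconj z) = Cnorm2 z.
Proof. destruct z; unfold Cnorm2, Cconj; simpl; ring. Qed.

Lemma cabs_conj z : cabs (Cconj z) = cabs z.
Proof. unfold cabs; rewrite Cnorm2_conj; auto. Qed.

Lemma Cnorm2_expi x : Cnorm2 (Cexpi x) = 1.
Proof. unfold Cnorm2, Cexpi; simpl. pose proof (sin2_cos2 x). unfold Rsqr in H. lra. Qed.

Lemma cabs_expi x : cabs (Cexpi x) = 1.
Proof. unfold cabs; rewrite Cnorm2_expi; apply sqrt_1. Qed.

Lemma cabs_C0 : cabs C0 = 0.
Proof. unfold cabs, Cnorm2, C0; simpl. replace (0*0+0*0) with 0 by ring. apply sqrt_0. Qed.

Lemma cabs_add z w : cabs (Cadd z w) <= cabs z + cabs w.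
Proof.
  destruct z as [x1 y1], w as [x2 y2]. unfold cabs, Cnorm2, Cadd; simpl.
  set (p := sqrt (x1*x1+y1*y1)). set (q := sqrt (x2*x2+y2*y2)).
  assert (Hp : p*p = x1*x1+y1*y1) by (apply sqrt_sqrt; nra).
  assert (Hq : q*q = x2*x2+y2*y2) by (apply sqrt_sqrt; nra).
  assert (p0 : 0 <= p) by apply sqrt_pos. assert (q0 : 0 <= q) by apply sqrt_pos.
  assert (Hx : x1*x2+y1*y2 <= p*q).
  { assert ((x1*x2+y1*y2)^2 <= (p*q)^2).
    { replace ((p*q)^2) with ((x1*x1+y1*y1)*(x2*x2+y2*y2)) by (rewrite <- Hp, <- Hq; ring).
      assert (0 <= (x1*y2 - x2*y1)^2) by apply pow2_ge_0.
      assert ((x1*x1+y1*y1)*(x2*x2+y2*y2) - (x1*x2+y1*y2)^2 = (x1*y2 - x2*y1)^2) by ring.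
      lra. }
    assert (0 <= p*q) by nra.
    destruct (Rle_dec (x1*x2+y1*y2) 0). lra.
    apply Rsqr_incr_0_var. unfold Rsqr; nra. lra. }
  rewrite <- (sqrt_square (p+q)) by lra.
  apply sqrt_le_1_alt. nra.
Qed.

Lemma cabs_Czsum K f : cabs (Czsum K f) <= zsum K (fun x => cabs (f x)).
Proof.
  unfold Czsum, zsum. induction (zrange K) as [|a l IH]; simpl.
  - rewrite cabs_C0; lra.
  - eapply Rle_trans. apply cabs_add. lra.
Qed.

Lemma fst_le_cabs z : Rabs (fst z) <= cabs z.
Proof.
  destruct z as [x y]; unfold cabs, Cnorm2; simpl.
  rewrite <- sqrt_Rsqr_abs. apply sqrt_le_1_alt. unfold Rsqr; nra.
Qed.
Lemma snd_le_cabs z : Rabs (snd z) <= cabs z.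
Proof.
  destruct z as [x y]; unfold cabs, Cnorm2; simpl.
  rewrite <- sqrt_Rsqr_abs. apply sqrt_le_1_alt. unfold Rsqr; nra.
Qed.

Lemma cabs_sub_star v w n : Csub (star v n) (star w n) = Cconj (Csub (v (-n)%Z) (w (-n)%Z)).
Proof. unfold star, Csub, Cadd, Copp, Cconj; simpl. f_equal; ring. Qed.

Lemma tri_diff a b c a' b' c' :
  Csub (Cmul a (Cmul b c)) (Cmul a' (Cmul b' c')) =
  Cadd (Cmul (Csub a a') (Cmul b c))
   (Cadd (Cmul a' (Cmul (Csub b b') c)) (Cmul a' (Cmul b' (Csub c c')))).
Proof.
  destruct a, b, c, a', b', c'. unfold Csub, Cadd, Copp, Cmul; simpl. f_equal; ring.
Qed.

Lemma Csub_if (P : bool) u x y : Csub (if P then Cmul u x else C0) (if P then Cmul u y else C0) =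
  if P then Cmul u (Csub x y) else C0.
Proof. destruct P; destruct u, x, y; unfold Csub, Cadd, Copp, Cmul, C0; simpl; f_equal; ring. Qed.

Lemma Csub_Czsum K f g : Csub (Czsum K f) (Czsum K g) = Czsum K (fun x => Csub (f x) (g x)).
Proof.
  unfold Czsum. induction (zrange K) as [|a l IH]; simpl.
  - unfold Csub, Cadd, Copp, C0; simpl; f_equal; ring.
  - rewrite <- IH. destruct (f a), (g a), (fold_right Cadd C0 (map f l)), (fold_right Cadd C0 (map g l)).
    unfold Csub, Cadd, Copp; simpl; f_equal; ring.
Qed.

Definition r (x : Z) : R := / (1 + IZR (Z.abs x)).

Lemma r_pos x : 0 < r x.
Proof. unfold r. apply Rinv_0_lt_compat. pose proof (IZR_le _ _ (Z.abs_nonneg x)). lra. Qed.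

Definition phi (x : Z) : R := if (x <=? 0)%Z then / (1 - IZR x) else 3 - / IZR x.

Lemma inv_step y : 1 <= y -> / (1 + y) ^ 2 <= / y - / (y + 1).
Proof.
  intros Hy.
  replace (/ y - / (y + 1)) with (/ (y * (y+1))) by (field; lra).
  apply Rinv_le_contravar. nra. nra.
Qed.

Lemma phi_step x : r x ^ 2 <= phi (x + 1) - phi x.
Proof.
  unfold r, phi. rewrite pow_inv.
  destruct (Z.le_gt_cases x (-1)) as [h|h].
  - replace ((x + 1 <=? 0)%Z) with true by (symmetry; apply Z.leb_le; lia).
    replace ((x <=? 0)%Z) with true by (symmetry; apply Z.leb_le; lia).
    rewrite Z.abs_neq by lia. rewrite plus_IZR, opp_IZR.
    assert (IZR x <= -1) by (apply (IZR_le x (-1)); lia).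
    replace (1 - (IZR x + 1)) with (- IZR x) by ring.
    replace (1 - IZR x) with (- IZR x + 1) by ring.
    replace (1 + - IZR x) with (1 + (- IZR x)) by ring.
    apply inv_step. lra.
  - destruct (Z.eq_dec x 0) as [->|hx].
    + simpl. replace (1 + 0) with 1 by ring. replace (1 - 0) with 1 by ring.
      replace (1 ^ 2) with 1 by ring. rewrite Rinv_1. lra.
    + replace ((x + 1 <=? 0)%Z) with false by (symmetry; apply Z.leb_gt; lia).
      replace ((x <=? 0)%Z) with false by (symmetry; apply Z.leb_gt; lia).
      rewrite Z.abs_eq by lia. rewrite plus_IZR.
      assert (1 <= IZR x) by (apply IZR_le; lia).
      pose proof (inv_step (IZR x) H). replace (1 + IZR x) with (IZR x + 1) in * by ring. lra.
Qed.

Lemma phi_bounds x : 0 <= phi x <= 3.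
Proof.
  unfold phi. destruct (x <=? 0)%Z eqn:E.
  - apply Z.leb_le in E. apply IZR_le in E.
    split. left; apply Rinv_0_lt_compat; lra.
    assert (/ (1 - IZR x) <= / 1) by (apply Rinv_le_contravar; lra). rewrite Rinv_1 in H. lra.
  - apply Z.leb_gt in E. assert (1 <= IZR x) by (apply IZR_le; lia).
    assert (0 < / IZR x) by (apply Rinv_0_lt_compat; lra).
    assert (/ IZR x <= / 1) by (apply Rinv_le_contravar; lra). rewrite Rinv_1 in H1. lra.
Qed.

Lemma isum_telescope a n (g : Z -> R) : isum a n (fun x => g (x + 1)%Z - g x) = g (a + Z.of_nat n)%Z - g a.
Proof.
  revert a; induction n as [|n IH]; intros a; simpl.
  - replace (a + 0)%Z with a by lia. ring.
  - rewrite IH. replace (a + 1 + Z.of_nat n)%Z with (a + Z.pos (Pos.of_succ_nat n))%Z by lia. ring.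
Qed.

Lemma Bnd_r2 : Bnd (fun x => r x ^ 2) 3.
Proof.
  intros a n. eapply Rle_trans. apply isum_le. intros i _. apply phi_step.
  rewrite isum_telescope. pose proof (phi_bounds (a + Z.of_nat n)). pose proof (phi_bounds a). lra.
Qed.

Lemma r_le_1 x : r x <= 1.
Proof.
  unfold r. pose proof (IZR_le _ _ (Z.abs_nonneg x)).
  rewrite <- Rinv_1 at 2. apply Rinv_le_contravar; lra.
Qed.

Lemma sum_prod_bnd a n f X c Y : (forall x, 0 <= f x) -> Bnd f X -> 0 <= c -> c <= Y ->
  isum a n (fun i => f i * c) <= X * Y.
Proof.
  intros Hf HB Hc HY. replace (isum a n (fun i => f i * c)) with (c * isum a n f).
  2:{ rewrite <- isum_scal. apply isum_ext; intros; ring. }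
  pose proof (HB a n). pose proof (HB 0%Z 0%nat). simpl in H0.
  pose proof (isum_nonneg a n f Hf). nra.
Qed.

Section Core.
Variables (al be ga : Z -> R) (A2 B2 D2 : R).
Hypotheses (Hal : forall x, 0 <= al x) (Hbe : forall x, 0 <= be x) (Hga : forall x, 0 <= ga x).
Hypotheses (HA : Bnd (fun x => al x ^ 2) A2) (HB : Bnd (fun x => be x ^ 2) B2)
  (HD : Bnd (fun x => ga x ^ 2) D2).

Lemma A2_nonneg : 0 <= A2.
Proof. specialize (HA 0%Z 0%nat). simpl in HA. lra. Qed.
Lemma B2_nonneg : 0 <= B2.
Proof. specialize (HB 0%Z 0%nat). simpl in HB. lra. Qed.
Lemma D2_nonneg : 0 <= D2.
Proof. specialize (HD 0%Z 0%nat). simpl in HD. lra. Qed.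

Variables (a a1 a2 : Z) (m m1 m2 : nat).

Definition G1 n := isum a1 m1 (fun i => isum a2 m2 (fun j => (r i * r j) * (al i * be j * ga (n - i - j)%Z))).

Lemma r2sum b k : isum b k (fun x => r x ^ 2) <= 3.
Proof. apply Bnd_r2. Qed.

Lemma E1 : isum a m (fun n => (G1 n)^2) <= 9 * (A2 * B2 * D2).
Proof.
  eapply Rle_trans.
  { apply isum_le. intros n _. unfold G1. apply CS2. }
  assert (Hk : isum a1 m1 (fun i => isum a2 m2 (fun j => (r i * r j)^2)) <= 9).
  { replace (isum a1 m1 (fun i => isum a2 m2 (fun j => (r i * r j)^2))) with
      (isum a1 m1 (fun i => r i ^2 * isum a2 m2 (fun j => r j ^2))).
    2:{ apply isum_ext; intros. rewrite <- isum_scal. apply isum_ext; intros; ring. }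
    replace 9 with (3 * 3) by ring. apply sum_prod_bnd. intros; apply pow2_ge_0. apply Bnd_r2.
    apply isum_nonneg; intros; apply pow2_ge_0. apply Bnd_r2. }
  eapply Rle_trans.
  { apply isum_le. intros n _. apply Rmult_le_compat_r. 2: apply Hk.
    apply isum_nonneg; intros; apply isum_nonneg; intros; apply pow2_ge_0. }
  rewrite isum_scal. apply Rmult_le_compat_l. lra.
  rewrite isum_swap.
  apply Rle_trans with (isum a1 m1 (fun i => isum a2 m2 (fun j => al i ^ 2 * be j ^ 2 * D2))).
  { apply isum_le. intros i _. rewrite isum_swap. apply isum_le. intros j _.
    replace (isum a m (fun n => (al i * be j * ga (n - i - j)%Z) ^ 2)) with
      (al i ^2 * be j ^2 * isum a m (fun n => ga (n + (- i - j))%Z ^ 2)).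
    2:{ rewrite <- isum_scal. apply isum_ext; intros x _. replace (x - i - j)%Z with (x + (-i-j))%Z by lia. ring. }
    pose proof (isum_shift a m (-i-j) (fun y => ga y ^ 2)) as Hs; cbv beta in Hs.
    rewrite Hs. apply Rmult_le_compat_l. apply Rmult_le_pos; apply pow2_ge_0.
    apply HD. }
  replace (isum a1 m1 (fun i => isum a2 m2 (fun j => al i ^ 2 * be j ^ 2 * D2))) with
    (isum a1 m1 (fun i => al i ^2 * (isum a2 m2 (fun j => be j ^ 2) * D2))).
  2:{ apply isum_ext; intros x _. symmetry.
      rewrite (isum_ext _ _ _ (fun j => (al x ^2 * D2) * be j ^2)) by (intros; ring).
      rewrite isum_scal. ring. }
  replace (A2 * B2 * D2) with (A2 * (B2 * D2)) by ring.
  apply sum_prod_bnd. intros; apply pow2_ge_0. auto.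
  apply Rmult_le_pos. apply isum_nonneg; intros; apply pow2_ge_0. apply D2_nonneg.
  apply Rmult_le_compat_r. apply D2_nonneg. apply HB.
Qed.

Lemma gshift (g : Z -> R) X b k c : Bnd g X -> isum b k (fun n => g (n - c)%Z) <= X.
Proof.
  intros H. rewrite (isum_ext _ _ _ (fun n => g (n + (-c))%Z)) by (intros; f_equal; lia).
  rewrite isum_shift. apply H.
Qed.

Lemma grefl (g : Z -> R) X b k c : Bnd g X -> isum b k (fun n => g (c - n)%Z) <= X.
Proof. intros H. rewrite isum_refl. apply H. Qed.

Definition G3 n := isum a1 m1 (fun i => isum a2 m2 (fun j =>
   (r (n - i - j)%Z * r (i + j)%Z) * (al i * be j * ga (n - i - j)%Z))).

Lemma E3 : isum a m (fun n => (G3 n)^2) <= 9 * (A2 * B2 * D2).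
Proof.
  apply Rle_trans with (isum a m (fun n => (3 * B2) *
     isum a1 m1 (fun i => isum a2 m2 (fun j => (r (i + j)%Z * al i * ga (n - i - j)%Z)^2)))).
  { apply isum_le. intros n _.
    unfold G3.
    rewrite (isum_ext _ _ _ (fun i => isum a2 m2 (fun j => (r (n - i - j)%Z * be j) *
       (r (i + j)%Z * al i * ga (n - i - j)%Z)))).
    2:{ intros; apply isum_ext; intros; ring. }
    eapply Rle_trans. apply CS2.
    apply Rmult_le_compat_r.
    apply isum_nonneg; intros; apply isum_nonneg; intros; apply pow2_ge_0.
    rewrite isum_swap.
    apply Rle_trans with (isum a2 m2 (fun j => be j ^ 2 * 3)).
    { apply isum_le; intros j _.
      rewrite (isum_ext _ _ _ (fun i => be j ^ 2 * (fun x => r x ^ 2) ((n - j) - i)%Z)).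
      2:{ intros x _; cbv beta. replace (n - x - j)%Z with (n - j - x)%Z by lia. ring. }
      rewrite isum_scal. apply Rmult_le_compat_l. apply pow2_ge_0. apply (grefl (fun x => r x ^ 2)). apply Bnd_r2. }
    rewrite Rmult_comm. apply sum_prod_bnd. intros; apply pow2_ge_0. auto. lra. lra. }
  rewrite isum_scal. replace (9 * (A2*B2*D2)) with (3 * B2 * (3 * A2 * D2)) by ring.
  apply Rmult_le_compat_l. pose proof B2_nonneg; lra.
  rewrite isum_swap.
  apply Rle_trans with (isum a1 m1 (fun i => al i ^ 2 * (3 * D2))).
  { apply isum_le; intros i _. rewrite isum_swap.
    apply Rle_trans with (isum a2 m2 (fun j => r (j + i)%Z ^ 2 * (al i ^ 2 * D2))).
    { apply isum_le; intros j _.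
      rewrite (isum_ext _ _ _ (fun n => (r (j + i)%Z ^ 2 * al i ^ 2) * (fun x => ga x ^ 2) (n - (i + j))%Z)).
      2:{ intros x _; cbv beta. replace (x - i - j)%Z with (x - (i + j))%Z by lia.
          replace (i + j)%Z with (j + i)%Z by lia. ring. }
      rewrite isum_scal. replace (r (j + i)%Z ^ 2 * (al i ^ 2 * D2)) with
        ((r (j + i)%Z ^ 2 * al i ^ 2) * D2) by ring.
      apply Rmult_le_compat_l. apply Rmult_le_pos; apply pow2_ge_0. apply (gshift (fun x => ga x ^ 2)). auto. }
    replace (al i ^ 2 * (3 * D2)) with (3 * (al i ^ 2 * D2)) by ring.
    apply sum_prod_bnd. intros; apply pow2_ge_0.
    apply (Bnd_shift (fun x => r x ^ 2)). apply Bnd_r2.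
    pose proof (pow2_ge_0 (al i)); pose proof D2_nonneg; nra. lra. }
  replace (3 * A2 * D2) with (A2 * (3 * D2)) by ring.
  apply sum_prod_bnd. intros; apply pow2_ge_0. auto. pose proof D2_nonneg; lra. lra.
Qed.

Definition G2 n := isum a1 m1 (fun i => isum a2 m2 (fun j =>
   (r j * r (n - j)%Z) * (al i * be j * ga (n - i - j)%Z))).

Lemma E2 : isum a m (fun n => (G2 n)^2) <= 9 * (A2 * B2 * D2).
Proof.
  apply Rle_trans with (isum a m (fun n => (3 * (A2 * D2)) *
     isum a2 m2 (fun j => r (n - j)%Z ^ 2 * be j ^ 2))).
  { apply isum_le. intros n _. unfold G2. rewrite isum_swap.
    rewrite (isum_ext _ _ _ (fun j => r j * (r (n - j)%Z * be j *
        isum a1 m1 (fun i => al i * ga (n - i - j)%Z)))).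
    2:{ intros j _. rewrite <- isum_scal, <- isum_scal. apply isum_ext; intros; ring. }
    eapply Rle_trans. apply CS.
    apply Rle_trans with (3 * isum a2 m2 (fun j => r (n - j)%Z ^ 2 * be j ^ 2 * (A2 * D2))).
    { apply Rmult_le_compat. apply isum_nonneg; intros; apply pow2_ge_0.
      apply isum_nonneg; intros; apply pow2_ge_0. apply Bnd_r2.
      apply isum_le. intros j _.
      replace ((r (n - j)%Z * be j * isum a1 m1 (fun i => al i * ga (n - i - j)%Z)) ^ 2) with
        (r (n - j)%Z ^ 2 * be j ^ 2 * (isum a1 m1 (fun i => al i * ga (n - i - j)%Z)) ^ 2) by ring.
      apply Rmult_le_compat_l. apply Rmult_le_pos; apply pow2_ge_0.
      eapply Rle_trans. apply CS. apply Rmult_le_compat.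
      apply isum_nonneg; intros; apply pow2_ge_0. apply isum_nonneg; intros; apply pow2_ge_0.
      apply HA.
      rewrite (isum_ext _ _ _ (fun i => (fun x => ga x ^ 2) ((n - j) - i)%Z)).
      2:{ intros x _; cbv beta. do 2 f_equal. lia. }
      apply (grefl (fun x => ga x ^ 2)). auto. }
    rewrite <- isum_scal. rewrite <- isum_scal. apply Req_le. apply isum_ext; intros; ring. }
  rewrite isum_scal. replace (9 * (A2*B2*D2)) with (3 * (A2 * D2) * (B2 * 3)) by ring.
  apply Rmult_le_compat_l. pose proof A2_nonneg; pose proof D2_nonneg; nra.
  rewrite isum_swap.
  rewrite (isum_ext _ _ _ (fun j => be j ^ 2 * isum a m (fun n => (fun x => r x ^ 2) (n - j)%Z))).
  2:{ intros j _. rewrite <- isum_scal. apply isum_ext; intros; cbv beta; ring. }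
  apply Rle_trans with (isum a2 m2 (fun j => be j ^ 2 * 3)).
  { apply isum_le; intros j _. apply Rmult_le_compat_l. apply pow2_ge_0.
    apply (gshift (fun x => r x ^ 2)). apply Bnd_r2. }
  apply sum_prod_bnd. intros; apply pow2_ge_0. auto. lra. lra.
Qed.

Definition Ek (n i j : Z) : R := r i * r j + r j * r (n - j)%Z + r (n - i - j)%Z * r (i + j)%Z.

Lemma Fcore : isum a m (fun n => (isum a1 m1 (fun i => isum a2 m2 (fun j =>
    Ek n i j * (al i * be j * ga (n - i - j)%Z))))^2) <= 81 * (A2 * B2 * D2).
Proof.
  pose proof E1. pose proof E2. pose proof E3.
  apply Rle_trans with (isum a m (fun n => 3 * ((G1 n)^2 + (G2 n)^2 + (G3 n)^2))).
  { apply isum_le; intros n _.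
    replace (isum a1 m1 (fun i => isum a2 m2 (fun j => Ek n i j * (al i * be j * ga (n - i - j)%Z))))
      with (G1 n + G2 n + G3 n).
    2:{ unfold G1, G2, G3. rewrite <- !isum_plus. apply isum_ext; intros.
        rewrite <- !isum_plus. apply isum_ext; intros. unfold Ek. ring. }
    pose proof (pow2_ge_0 (G1 n - G2 n)). pose proof (pow2_ge_0 (G1 n - G3 n)).
    pose proof (pow2_ge_0 (G2 n - G3 n)). nra. }
  rewrite isum_scal, !isum_plus. lra.
Qed.

End Core.

Definition hZ (k : Z) : Z := if (k =? 0)%Z then 1%Z else Z.abs k.

Lemma kernZ n n1 n2 : (0 < n)%Z -> (n2 + (n - n1 - n2) < 0)%Z -> (n - n1 - n2 <> 0)%Z ->
  ((n1 + n2) * (n1 + (n - n1 - n2)) <> 0)%Z ->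
  (n < n1)%Z /\
  ((2 * Z.abs (n * (n2 + (n - n1 - n2))) * (1 + Z.abs n1) * (1 + Z.abs n2)
      <= 4 * Z.abs (Phi n n1 n2 (n - n1 - n2)) * hZ n1 * hZ n2)%Z \/
   (2 * Z.abs (n * (n2 + (n - n1 - n2))) * (1 + Z.abs n2) * (1 + Z.abs (n - n2))
      <= 4 * Z.abs (Phi n n1 n2 (n - n1 - n2)) * hZ n1 * hZ n2)%Z \/
   (2 * Z.abs (n * (n2 + (n - n1 - n2))) * (1 + Z.abs (n - n1 - n2)) * (1 + Z.abs (n1 + n2))
      <= 4 * Z.abs (Phi n n1 n2 (n - n1 - n2)) * hZ n1 * hZ n2)%Z).
Proof.
  intros Hn Hneg H3 H13.
  remember (n - n1 - n2)%Z as n3 eqn:Hn3.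
  remember (- (n2 + n3))%Z as q eqn:Hq.
  assert (Hn1 : n1 = (n + q)%Z) by lia.
  split; [lia|].
  assert (HX : Z.abs (n * (n2 + n3)) = (n * q)%Z).
  { rewrite Z.abs_neq. rewrite Hq; ring. apply Z.mul_nonneg_nonpos; lia. }
  rewrite HX.
  assert (h1 : hZ n1 = n1) by (unfold hZ; destruct (n1 =? 0)%Z eqn:E; [apply Z.eqb_eq in E; lia | lia]).
  rewrite h1.
  unfold Phi. rewrite (Z.abs_eq n) by lia. rewrite (Z.abs_eq n1) by lia.
  destruct (Z.lt_trichotomy n2 0) as [Hn2|[Hn2|Hn2]].
  - assert (h2 : hZ n2 = (- n2)%Z) by (unfold hZ; destruct (n2 =? 0)%Z eqn:E; [apply Z.eqb_eq in E; lia | lia]).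
    rewrite h2. rewrite (Z.abs_neq n2) by lia.
    destruct (Z.lt_trichotomy n3 0) as [Hs3|[Hs3|Hs3]]; [|lia|].
    + left. rewrite (Z.abs_neq n3) by lia.
      assert (E : (n * n - n1 * n1 - n2 * - n2 - n3 * - n3 = - (2 * n * q + 2 * n2 * n3))%Z) by (rewrite Hn1, Hq; ring).
      assert (0 <= n2 * n3)%Z by (apply Z.mul_nonpos_nonpos; lia).
      assert (0 <= n * q)%Z by (apply Z.mul_nonneg_nonneg; lia).
      rewrite E. rewrite Z.abs_neq by lia.
      assert (1 + n1 <= 2 * n1)%Z by lia. assert (1 + - n2 <= 2 * - n2)%Z by lia.
      assert (0 <= n * q)%Z by (apply Z.mul_nonneg_nonneg; lia).
      assert (Hb : (2 * (n * q) * (1 + n1) * (1 + - n2) <= 2 * (n * q) * (2 * n1) * (2 * - n2))%Z).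
      { apply Z.mul_le_mono_nonneg; [apply Z.mul_nonneg_nonneg; lia|apply Z.mul_le_mono_nonneg_l; lia|lia|lia]. }
      eapply Z.le_trans; [exact Hb|].
      assert (0 <= n2 * n3 * (n1 * - n2))%Z by (apply Z.mul_nonneg_nonneg; [lia| apply Z.mul_nonneg_nonneg; lia]).
      lia.
    + right; right. rewrite (Z.abs_eq n3) by lia.
      assert (E : (n * n - n1 * n1 - n2 * - n2 - n3 * n3 = - 2 * q * (n1 + n2))%Z) by (rewrite Hn1, Hq; ring).
      rewrite E.
      rewrite Z.abs_mul. replace (Z.abs (-2 * q)) with (2 * q)%Z by lia.
      assert (n1 + n2 <> 0)%Z by (intro Z0; apply H13; rewrite Z0; ring).
      assert (0 <= n * q)%Z by (apply Z.mul_nonneg_nonneg; lia).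
      assert (n * q <= n1 * q)%Z by (apply Z.mul_le_mono_nonneg_r; lia).
      assert (Hb : (2 * (n * q) * (1 + n3) * (1 + Z.abs (n1 + n2)) <= 2 * (n1 * q) * (2 * - n2) * (2 * Z.abs (n1 + n2)))%Z).
      { apply Z.mul_le_mono_nonneg; [apply Z.mul_nonneg_nonneg; lia| |lia|lia].
        apply Z.mul_le_mono_nonneg; lia. }
      eapply Z.le_trans; [exact Hb|]. lia.
  - subst n2. left. assert (h2 : hZ 0 = 1%Z) by reflexivity. rewrite h2.
    rewrite (Z.abs_neq n3) by lia.
    assert (E : (n * n - n1 * n1 - 0 * Z.abs 0 - n3 * - n3 = - (2 * n * q))%Z) by (rewrite Hn1, Hq; change (Z.abs 0) with 0%Z; ring).
    assert (0 <= n * q)%Z by (apply Z.mul_nonneg_nonneg; lia).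
    rewrite E. rewrite Z.abs_neq by lia. change (Z.abs 0) with 0%Z.
    assert (n * q * (1 + n1) <= n * q * (4 * n1))%Z by (apply Z.mul_le_mono_nonneg_l; lia).
    lia.
  - assert (h2 : hZ n2 = n2) by (unfold hZ; destruct (n2 =? 0)%Z eqn:E; [apply Z.eqb_eq in E; lia | lia]).
    rewrite h2. rewrite (Z.abs_eq n2) by lia. rewrite (Z.abs_neq n3) by lia.
    right; left.
    assert (E : (n * n - n1 * n1 - n2 * n2 - n3 * - n3 = - 2 * q * (n - n2))%Z) by (rewrite Hn1, Hq; ring).
    rewrite E. rewrite Z.abs_mul. replace (Z.abs (-2 * q)) with (2 * q)%Z by lia.
    assert (n - n2 <> 0)%Z.
    { intro Z0. apply H13. replace (n1 + n3)%Z with (n - n2)%Z by lia. rewrite Z0; ring. }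
    assert (0 <= n * q)%Z by (apply Z.mul_nonneg_nonneg; lia).
    assert (n * q <= n1 * q)%Z by (apply Z.mul_le_mono_nonneg_r; lia).
    assert (Hb : (2 * (n * q) * (1 + n2) * (1 + Z.abs (n - n2)) <= 2 * (n1 * q) * (2 * n2) * (2 * Z.abs (n - n2)))%Z).
    { apply Z.mul_le_mono_nonneg; [apply Z.mul_nonneg_nonneg; lia| |lia|lia].
      apply Z.mul_le_mono_nonneg; lia. }
    eapply Z.le_trans; [exact Hb|]. lia.
Qed.

Lemma cabs_hatn k : cabs (hatn k) = IZR (hZ k).
Proof.
  unfold cabs, hatn, hZ, Cnorm2. destruct (k =? 0)%Z; simpl.
  - replace (0 * 0 + -1 * -1) with 1 by ring. apply sqrt_1.
  - replace (IZR k * IZR k + 0 * 0) with (Rsqr (IZR k)) by (unfold Rsqr; ring).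
    rewrite sqrt_Rsqr_abs. apply Rabs_Zabs.
Qed.

Lemma hZ_ge1 k : 1 <= IZR (hZ k).
Proof. unfold hZ. destruct (k =? 0)%Z eqn:E. lra. apply IZR_le. apply Z.eqb_neq in E. lia. Qed.

Lemma cabs_inv z : 0 < Cnorm2 z -> cabs (Cinv z) = / cabs z.
Proof.
  intros H. unfold cabs. rewrite <- sqrt_inv. f_equal.
  destruct z as [x y]; unfold Cinv, Cnorm2 in *; simpl in *. field. lra.
Qed.

Lemma cabs_im y : cabs (0, y) = Rabs y.
Proof. unfold cabs, Cnorm2; simpl. rewrite <- sqrt_Rsqr_abs. f_equal. unfold Rsqr; ring. Qed.

Lemma jbr_pos s n : 0 < jbr2s s n.
Proof. unfold jbr2s, Rpower. apply exp_pos. Qed.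

Lemma jbr_ge1 s n : 0 <= s -> 1 <= jbr2s s n.
Proof.
  intros Hs. unfold jbr2s. pose proof (pow2_ge_0 (IZR n)).
  apply Rle_trans with (Rpower (1 + IZR n ^ 2) 0). rewrite Rpower_O; lra.
  apply Rle_Rpower. pose proof (pow2_ge_0 (IZR n)); lra. auto.
Qed.

Lemma jbr_mono s n n1 : 0 <= s -> (0 < n)%Z -> (n < n1)%Z -> jbr2s s n <= jbr2s s n1.
Proof.
  intros Hs H1 H2. unfold jbr2s. apply Rle_Rpower_l. auto.
  assert (0 < IZR n) by (apply IZR_lt; auto). assert (IZR n < IZR n1) by (apply IZR_lt; auto).
  split; nra.
Qed.

Lemma Ek_nonneg n i j : 0 <= Ek n i j.
Proof.
  unfold Ek. pose proof (r_pos i). pose proof (r_pos j). pose proof (r_pos (n - j)).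
  pose proof (r_pos (n - i - j)). pose proof (r_pos (i + j)). nra.
Qed.

Lemma bnd_to_r a b X P H1 H2 : 0 < H1 -> 0 < H2 -> 0 <= X ->
  2 * X * (1 + IZR (Z.abs a)) * (1 + IZR (Z.abs b)) <= 4 * P * H1 * H2 ->
  2 * X * / (H1 * H2) <= 4 * P * (r a * r b).
Proof.
  intros h1 h2 hX H. unfold r.
  assert (ha : 0 < 1 + IZR (Z.abs a)) by (pose proof (IZR_le _ _ (Z.abs_nonneg a)); lra).
  assert (hb : 0 < 1 + IZR (Z.abs b)) by (pose proof (IZR_le _ _ (Z.abs_nonneg b)); lra).
  apply Rmult_le_reg_r with (r := H1 * H2 * ((1 + IZR (Z.abs a)) * (1 + IZR (Z.abs b)))).
  apply Rmult_lt_0_compat; apply Rmult_lt_0_compat; lra.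
  replace (2 * X * / (H1 * H2) * (H1 * H2 * ((1 + IZR (Z.abs a)) * (1 + IZR (Z.abs b)))))
    with (2 * X * (1 + IZR (Z.abs a)) * (1 + IZR (Z.abs b))) by (field; lra).
  replace (4 * P * (/ (1 + IZR (Z.abs a)) * / (1 + IZR (Z.abs b))) * (H1 * H2 * ((1 + IZR (Z.abs a)) * (1 + IZR (Z.abs b)))))
    with (4 * P * H1 * H2) by (field; lra).
  auto.
Qed.

Lemma kern s M n n1 n2 : 0 <= s -> (0 < n)%Z -> Rabs (IZR (Phi n n1 n2 (n - n1 - n2))) <= M ->
  sqrt (jbr2s s n) * cabs (mt1 n n1 n2 (n - n1 - n2)) <= 4 * M * Ek n n1 n2 * sqrt (jbr2s s n1).
Proof.
  intros Hs Hn HM.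
  assert (M0 : 0 <= M) by (pose proof (Rabs_pos (IZR (Phi n n1 n2 (n - n1 - n2)))); lra).
  assert (R0 : 0 <= 4 * M * Ek n n1 n2 * sqrt (jbr2s s n1)).
  { pose proof (Ek_nonneg n n1 n2). pose proof (sqrt_pos (jbr2s s n1)).
    apply Rmult_le_pos; [|auto]. apply Rmult_le_pos; [lra|auto]. }
  unfold mt1. destruct (Z.eqb _ 0) eqn:E1.
  { rewrite cabs_C0, Rmult_0_r. auto. }
  unfold m1. destruct (Z.ltb 0 n && Z.ltb (n2 + (n - n1 - n2)) 0 && negb (Z.eqb (n - n1 - n2) 0))%bool eqn:E2.
  2:{ rewrite cabs_C0, Rmult_0_r. auto. }
  apply andb_prop in E2. destruct E2 as [E2 E4]. apply andb_prop in E2. destruct E2 as [_ E3].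
  apply Z.ltb_lt in E3. apply Bool.negb_true_iff in E4. apply Z.eqb_neq in E4. apply Z.eqb_neq in E1.
  destruct (kernZ n n1 n2 Hn E3 E4 E1) as [Hlt Hdisj].
  pose proof (hZ_ge1 n1) as Ha. pose proof (hZ_ge1 n2) as Hb.
  rewrite cabs_mul, cabs_im, cabs_inv.
  2:{ rewrite Cnorm2_mul, <- !cabs_sq, !cabs_hatn. apply Rmult_lt_0_compat; apply pow_lt; lra. }
  rewrite cabs_mul, !cabs_hatn.
  rewrite Rabs_mult, !Rabs_Zabs. change (IZR (Z.abs 2)) with 2.
  rewrite Rabs_Zabs in HM.
  set (X := IZR (Z.abs (n * (n2 + (n - n1 - n2))))).
  assert (X0 : 0 <= X) by (apply IZR_le; lia).
  assert (key : 2 * X * / (IZR (hZ n1) * IZR (hZ n2)) <= 4 * M * Ek n n1 n2).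
  { assert (P0 : 0 <= IZR (Z.abs (Phi n n1 n2 (n - n1 - n2)))) by (apply IZR_le; lia).
    pose proof (r_pos n1). pose proof (r_pos n2). pose proof (r_pos (n - n2)).
    pose proof (r_pos (n - n1 - n2)). pose proof (r_pos (n1 + n2)).
    set (P := IZR (Z.abs (Phi n n1 n2 (n - n1 - n2)))) in *.
    assert (Hfin : forall a b, r a * r b <= Ek n n1 n2 -> 2 * X * (1 + IZR (Z.abs a)) * (1 + IZR (Z.abs b)) <= 4 * P * IZR (hZ n1) * IZR (hZ n2) ->
       2 * X * / (IZR (hZ n1) * IZR (hZ n2)) <= 4 * M * Ek n n1 n2).
    { intros a b Hab Hx. apply Rle_trans with (4 * P * (r a * r b)).
      apply bnd_to_r; auto; lra.
      pose proof (r_pos a); pose proof (r_pos b).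
      apply Rmult_le_compat. lra. apply Rmult_le_pos; lra. lra. auto. }
    destruct Hdisj as [Hc|[Hc|Hc]]; apply IZR_le in Hc; rewrite !mult_IZR, !plus_IZR in Hc.
    - apply (Hfin n1 n2). unfold Ek; nra. exact Hc.
    - apply (Hfin n2 (n - n2)%Z). unfold Ek; nra. exact Hc.
    - apply (Hfin (n - n1 - n2)%Z (n1 + n2)%Z). unfold Ek; nra. exact Hc. }
  pose proof (sqrt_le_1_alt _ _ (jbr_mono s n n1 Hs Hn Hlt)).
  pose proof (sqrt_pos (jbr2s s n)).
  assert (0 <= 2 * X * / (IZR (hZ n1) * IZR (hZ n2))).
  { apply Rmult_le_pos. lra. left; apply Rinv_0_lt_compat; nra. }
  replace (2 * X * / (IZR (hZ n1) * IZR (hZ n2))) with (2 * X * / (IZR (hZ n1) * IZR (hZ n2))) in * by reflexivity.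
  rewrite Rmult_comm.
  replace (4 * M * Ek n n1 n2 * sqrt (jbr2s s n1)) with ((4 * M * Ek n n1 n2) * sqrt (jbr2s s n1)) by ring.
  apply Rmult_le_compat; auto.
Qed.

Definition alw (s : R) (a : Z -> Cx) (x : Z) : R := sqrt (jbr2s s x) * cabs (a x).
Definition bew (b : Z -> Cx) (x : Z) : R := cabs (b x).
Definition gaw (c : Z -> Cx) (x : Z) : R := cabs (c (- x)%Z).

Definition FF (s : R) (K : nat) (a b c : Z -> Cx) (n : Z) : R :=
  zsum K (fun i => zsum K (fun j => Ek n i j * (alw s a i * bew b j * gaw c (n - i - j)%Z))).

Lemma term_gen s M n n1 n2 th X : 0 <= s -> 0 <= M -> (0 < n)%Z ->
  sqrt (jbr2s s n) * cabs (if Rle_dec (Rabs (IZR (Phi n n1 n2 (n - n1 - n2)))) M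
     then Cmul (Cexpi th) (Cmul (mt1 n n1 n2 (n - n1 - n2)) X) else C0)
  <= 4 * M * Ek n n1 n2 * sqrt (jbr2s s n1) * cabs X.
Proof.
  intros Hs M0 Hn. destruct (Rle_dec _ _) as [h|h].
  - rewrite !cabs_mul, cabs_expi, Rmult_1_l.
    pose proof (kern s M n n1 n2 Hs Hn h). pose proof (cabs_nonneg X).
    rewrite <- Rmult_assoc. apply Rmult_le_compat_r; auto.
  - rewrite cabs_C0, Rmult_0_r.
    pose proof (Ek_nonneg n n1 n2). pose proof (sqrt_pos (jbr2s s n1)). pose proof (cabs_nonneg X).
    repeat apply Rmult_le_pos; lra.
Qed.

Lemma cabs_trip a b c : cabs (Cmul a (Cmul b c)) = cabs a * cabs b * cabs c.
Proof. rewrite !cabs_mul. ring. Qed.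

Lemma term_single s M t v n n1 n2 : 0 <= s -> 0 <= M -> (0 < n)%Z ->
  sqrt (jbr2s s n) * cabs (NR_term M t v n n1 n2) <=
  4 * M * (Ek n n1 n2 * (alw s v n1 * bew v n2 * gaw v (n - n1 - n2)%Z)).
Proof.
  intros Hs M0 Hn. unfold NR_term. cbv zeta.
  eapply Rle_trans. apply term_gen; auto.
  rewrite cabs_trip. unfold star. rewrite cabs_conj. unfold alw, bew, gaw.
  right; ring.
Qed.

Lemma term_diff s M t w w' n n1 n2 : 0 <= s -> 0 <= M -> (0 < n)%Z ->
  sqrt (jbr2s s n) * cabs (Csub (NR_term M t w n n1 n2) (NR_term M t w' n n1 n2)) <=
  4 * M * (Ek n n1 n2 * (alw s (fun x => Csub (w x) (w' x)) n1 * bew w n2 * gaw w (n - n1 - n2)%Z)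
         + Ek n n1 n2 * (alw s w' n1 * bew (fun x => Csub (w x) (w' x)) n2 * gaw w (n - n1 - n2)%Z)
         + Ek n n1 n2 * (alw s w' n1 * bew w' n2 * gaw (fun x => Csub (w x) (w' x)) (n - n1 - n2)%Z)).
Proof.
  intros Hs M0 Hn. unfold NR_term. cbv zeta.
  set (P := Phi n n1 n2 (n - n1 - n2)).
  set (mt := mt1 n n1 n2 (n - n1 - n2)).
  replace (Csub (if Rle_dec (Rabs (IZR P)) M
      then Cmul (Cexpi (t * IZR P)) (Cmul mt (Cmul (w n1) (Cmul (w n2) (star w (n - n1 - n2)%Z)))) else C0)
     (if Rle_dec (Rabs (IZR P)) M
      then Cmul (Cexpi (t * IZR P)) (Cmul mt (Cmul (w' n1) (Cmul (w' n2) (star w' (n - n1 - n2)%Z)))) else C0))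
   with (if Rle_dec (Rabs (IZR P)) M
      then Cmul (Cexpi (t * IZR P)) (Cmul mt (Csub (Cmul (w n1) (Cmul (w n2) (star w (n - n1 - n2)%Z)))
          (Cmul (w' n1) (Cmul (w' n2) (star w' (n - n1 - n2)%Z))))) else C0).
  2:{ destruct (Rle_dec _ _).
      - destruct (Cexpi (t * IZR P)), mt, (w n1), (w n2), (star w (n - n1 - n2)%Z), (w' n1), (w' n2), (star w' (n - n1 - n2)%Z).
        unfold Csub, Cadd, Copp, Cmul; simpl. f_equal; ring.
      - unfold Csub, Cadd, Copp, C0; simpl. f_equal; ring. }
  eapply Rle_trans. apply term_gen; auto.
  rewrite tri_diff.
  pose proof (Ek_nonneg n n1 n2). pose proof (sqrt_pos (jbr2s s n1)).
  assert (0 <= 4 * M * Ek n n1 n2 * sqrt (jbr2s s n1)) by (repeat apply Rmult_le_pos; lra).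
  eapply Rle_trans. apply Rmult_le_compat_l. auto.
  eapply Rle_trans. apply cabs_add. apply Rplus_le_compat_l. apply cabs_add.
  rewrite !cabs_trip, cabs_sub_star.
  unfold star. rewrite !cabs_conj. unfold alw, bew, gaw. right; ring.
Qed.

Definition Q (M t : R) (K : nat) (v : Z -> Cx) (n : Z) : Cx :=
  if (0 <? n)%Z then NR_partial M t v n K else C0.

Lemma Czsum_ext K f g : (forall x, f x = g x) -> Czsum K f = Czsum K g.
Proof. intros H. unfold Czsum. f_equal. apply map_ext. auto. Qed.

Lemma zsum_ext' K f g : (forall x, f x = g x) -> zsum K f = zsum K g.
Proof. intros H. unfold zsum. f_equal. apply map_ext. auto. Qed.

Lemma FF_nonneg s K a b c n : 0 <= FF s K a b c n.
Proof.
  unfold FF. apply zsum_nonneg; intros; apply zsum_nonneg; intros.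
  pose proof (Ek_nonneg n x x0). unfold alw, bew, gaw.
  pose proof (sqrt_pos (jbr2s s x)). pose proof (cabs_nonneg (a x)). pose proof (cabs_nonneg (b x0)).
  pose proof (cabs_nonneg (c (- (n - x - x0))%Z)).
  repeat apply Rmult_le_pos; auto.
Qed.

Lemma dbl_bound s K (g : Z -> Z -> Cx) (h : Z -> Z -> R) n :
  (forall i j, sqrt (jbr2s s n) * cabs (g i j) <= h i j) ->
  sqrt (jbr2s s n) * cabs (Czsum K (fun i => Czsum K (fun j => g i j))) <= zsum K (fun i => zsum K (fun j => h i j)).
Proof.
  intros H. pose proof (sqrt_pos (jbr2s s n)).
  eapply Rle_trans. apply Rmult_le_compat_l; auto. apply cabs_Czsum.
  rewrite <- zsum_scal. apply zsum_le; intros i _.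
  eapply Rle_trans. apply Rmult_le_compat_l; auto. apply cabs_Czsum.
  rewrite <- zsum_scal. apply zsum_le; intros j _. auto.
Qed.

Lemma per_single s M t K v n : 0 <= s -> 0 <= M ->
  sqrt (jbr2s s n) * cabs (Q M t K v n) <= 4 * M * FF s K v v v n.
Proof.
  intros Hs M0. unfold Q. destruct (0 <? n)%Z eqn:E.
  - apply Z.ltb_lt in E. unfold NR_partial, FF.
    rewrite <- zsum_scal. 
    rewrite (zsum_ext' K _ (fun i => zsum K (fun j => 4 * M * (Ek n i j * (alw s v i * bew v j * gaw v (n - i - j)%Z))))).
    2:{ intros; rewrite zsum_scal; auto. }
    apply dbl_bound. intros; apply term_single; auto.
  - rewrite cabs_C0, Rmult_0_r. pose proof (FF_nonneg s K v v v n). nra.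
Qed.

Lemma per_diff s M t K w w' n : 0 <= s -> 0 <= M ->
  sqrt (jbr2s s n) * cabs (Csub (Q M t K w n) (Q M t K w' n)) <=
  4 * M * (FF s K (fun x => Csub (w x) (w' x)) w w n + FF s K w' (fun x => Csub (w x) (w' x)) w n
           + FF s K w' w' (fun x => Csub (w x) (w' x)) n).
Proof.
  intros Hs M0. unfold Q. destruct (0 <? n)%Z eqn:E.
  - apply Z.ltb_lt in E. unfold NR_partial, FF.
    rewrite Csub_Czsum. rewrite (Czsum_ext K _ (fun i => Czsum K (fun j =>
        Csub (NR_term M t w n i j) (NR_term M t w' n i j)))).
    2:{ intros; apply Csub_Czsum. }
    rewrite <- !zsum_plus, <- zsum_scal.
    rewrite (zsum_ext' K _ (fun i => zsum K (fun j => 4 * M * (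
      Ek n i j * (alw s (fun x => Csub (w x) (w' x)) i * bew w j * gaw w (n - i - j)%Z)
         + Ek n i j * (alw s w' i * bew (fun x => Csub (w x) (w' x)) j * gaw w (n - i - j)%Z)
         + Ek n i j * (alw s w' i * bew w' j * gaw (fun x => Csub (w x) (w' x)) (n - i - j)%Z))))).
    2:{ intros; rewrite zsum_scal, !zsum_plus; auto. }
    apply dbl_bound. intros; apply term_diff; auto.
  - replace (Csub C0 C0) with C0 by (unfold Csub, Cadd, Copp, C0; simpl; f_equal; ring).
    rewrite cabs_C0, Rmult_0_r.
    pose proof (FF_nonneg s K (fun x => Csub (w x) (w' x)) w w n).
    pose proof (FF_nonneg s K w' (fun x => Csub (w x) (w' x)) w n).
    pose proof (FF_nonneg s K w' w' (fun x => Csub (w x) (w' x)) n). nra.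
Qed.

Lemma Bnd_alw s a A : l2s_le s a A -> Bnd (fun x => alw s a x ^ 2) (A ^ 2).
Proof.
  intros [_ H]. apply Bnd_of_zsum.
  - intros; apply pow2_ge_0.
  - intros K. rewrite (zsum_ext' K _ (fun n => jbr2s s n * Cnorm2 (a n))); auto.
    intros x. unfold alw. rewrite Rpow_mult_distr, cabs_sq. rewrite <- Rsqr_pow2, Rsqr_sqrt; auto.
    left; apply jbr_pos.
Qed.

Lemma Bnd_bew s b B : 0 <= s -> l2s_le s b B -> Bnd (fun x => bew b x ^ 2) (B ^ 2).
Proof.
  intros Hs [_ H]. apply Bnd_of_zsum.
  - intros; apply pow2_ge_0.
  - intros K. eapply Rle_trans; [|apply (H K)]. apply zsum_le. intros x _.
    unfold bew. rewrite cabs_sq. pose proof (jbr_ge1 s x Hs). pose proof (Cnorm2_nonneg (b x)). nra.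
Qed.

Lemma Bnd_gaw s c D : 0 <= s -> l2s_le s c D -> Bnd (fun x => gaw c x ^ 2) (D ^ 2).
Proof.
  intros Hs HD. pose proof (Bnd_bew s c D Hs HD) as HB.
  intros a n. pose proof (Bnd_refl _ _ 0%Z HB a n) as H.
  rewrite (isum_ext _ _ (fun x => gaw c x ^ 2) (fun x => bew c (0 - x)%Z ^ 2)); auto.
Qed.

Lemma FF_sum s K L a b c A B D : 0 <= s -> l2s_le s a A -> l2s_le s b B -> l2s_le s c D ->
  zsum L (fun n => FF s K a b c n ^ 2) <= 81 * (A ^ 2 * B ^ 2 * D ^ 2).
Proof.
  intros Hs Ha Hb Hc.
  rewrite zsum_isum.
  rewrite (isum_ext _ _ _ (fun n => (isum (- Z.of_nat K) (2 * K + 1) (fun i =>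
       isum (- Z.of_nat K) (2 * K + 1) (fun j =>
         Ek n i j * (alw s a i * bew b j * gaw c (n - i - j)%Z)))) ^ 2)).
  2:{ intros n _. unfold FF. rewrite zsum_isum. f_equal. apply isum_ext. intros. apply zsum_isum. }
  apply Fcore.
  - apply Bnd_alw; auto.
  - apply (Bnd_bew s); auto.
  - apply (Bnd_gaw s); auto.
Qed.

Lemma sq_mono x y : 0 <= x -> x <= y -> x ^ 2 <= y ^ 2.
Proof. intros. nra. Qed.

Lemma main_single s M t K L v A : 0 <= s -> 0 <= M -> l2s_le s v A ->
  zsum L (fun n => jbr2s s n * Cnorm2 (Q M t K v n)) <= 1296 * M ^ 2 * (A ^ 2 * A ^ 2 * A ^ 2).
Proof.
  intros Hs M0 Hv.
  apply Rle_trans with (zsum L (fun n => 16 * M ^ 2 * FF s K v v v n ^ 2)).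
  - apply zsum_le. intros n _.
    replace (jbr2s s n * Cnorm2 (Q M t K v n)) with ((sqrt (jbr2s s n) * cabs (Q M t K v n)) ^ 2).
    2:{ rewrite Rpow_mult_distr, cabs_sq. rewrite <- Rsqr_pow2, Rsqr_sqrt; auto. left; apply jbr_pos. }
    replace (16 * M ^ 2 * FF s K v v v n ^ 2) with ((4 * M * FF s K v v v n) ^ 2) by ring.
    apply sq_mono. pose proof (sqrt_pos (jbr2s s n)). pose proof (cabs_nonneg (Q M t K v n)). nra.
    apply per_single; auto.
  - rewrite zsum_scal. pose proof (FF_sum s K L v v v A A A Hs Hv Hv Hv).
    assert (0 <= M^2) by apply pow2_ge_0. nra.
Qed.

Lemma main_diff s M t K L w w' A B D : 0 <= s -> 0 <= M -> l2s_le s w A -> l2s_le s w' B ->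
  l2s_le s (fun x => Csub (w x) (w' x)) D ->
  zsum L (fun n => jbr2s s n * Cnorm2 (Csub (Q M t K w n) (Q M t K w' n)))
    <= 3888 * M ^ 2 * (D ^ 2 * A ^ 2 * A ^ 2 + B ^ 2 * D ^ 2 * A ^ 2 + B ^ 2 * B ^ 2 * D ^ 2).
Proof.
  intros Hs M0 Hw Hw' Hd.
  set (d := fun x => Csub (w x) (w' x)) in *.
  apply Rle_trans with (zsum L (fun n => 48 * M ^ 2 * (FF s K d w w n ^ 2 + FF s K w' d w n ^ 2 + FF s K w' w' d n ^ 2))).
  - apply zsum_le. intros n _.
    replace (jbr2s s n * Cnorm2 (Csub (Q M t K w n) (Q M t K w' n))) with
      ((sqrt (jbr2s s n) * cabs (Csub (Q M t K w n) (Q M t K w' n))) ^ 2).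
    2:{ rewrite Rpow_mult_distr, cabs_sq. rewrite <- Rsqr_pow2, Rsqr_sqrt; auto. left; apply jbr_pos. }
    apply Rle_trans with ((4 * M * (FF s K d w w n + FF s K w' d w n + FF s K w' w' d n)) ^ 2).
    apply sq_mono. pose proof (sqrt_pos (jbr2s s n)). pose proof (cabs_nonneg (Csub (Q M t K w n) (Q M t K w' n))). nra.
    apply per_diff; auto.
    pose proof (FF_nonneg s K d w w n). pose proof (FF_nonneg s K w' d w n). pose proof (FF_nonneg s K w' w' d n).
    set (x := FF s K d w w n) in *. set (y := FF s K w' d w n) in *. set (z := FF s K w' w' d n) in *.
    replace ((4 * M * (x + y + z)) ^ 2) with (16 * M^2 * (x + y + z)^2) by ring.
    assert (0 <= M^2) by apply pow2_ge_0.
    assert ((x + y + z)^2 <= 3 * (x^2 + y^2 + z^2)).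
    { pose proof (pow2_ge_0 (x - y)). pose proof (pow2_ge_0 (x - z)). pose proof (pow2_ge_0 (y - z)). nra. }
    nra.
  - rewrite zsum_scal, !zsum_plus.
    pose proof (FF_sum s K L d w w D A A Hs Hd Hw Hw).
    pose proof (FF_sum s K L w' d w B D A Hs Hw' Hd Hw).
    pose proof (FF_sum s K L w' w' d B B D Hs Hw' Hw' Hd).
    assert (0 <= M^2) by apply pow2_ge_0. nra.
Qed.

Definition S2 (K : nat) (g : Z -> Z -> R) : R := zsum K (fun i => zsum K (fun j => g i j)).

Lemma box_S K g : S2 K g = S2 (S K) (fun i j => if ((Z.abs i <=? Z.of_nat K) && (Z.abs j <=? Z.of_nat K))%Z%bool then g i j else 0).
Proof.
  unfold S2. rewrite <- zsum_chi. apply zsum_ext'. intros i.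
  destruct (Z.abs i <=? Z.of_nat K)%Z.
  - rewrite <- zsum_chi. apply zsum_ext'. intros j. simpl. reflexivity.
  - simpl. rewrite zsum_isum, isum_0. reflexivity.
Qed.

Lemma Rabs_le_inv x y : Rabs x <= y -> - y <= x <= y.
Proof. unfold Rabs. destruct (Rcase_abs x); lra. Qed.

Lemma zsum_abs K f g : (forall x, Rabs (f x) <= g x) -> Rabs (zsum K f) <= zsum K g.
Proof.
  intros H. apply Rabs_le. split.
  - rewrite <- (Rmult_1_l (zsum K g)). replace (- (1 * zsum K g)) with (-1 * zsum K g) by ring.
    rewrite <- zsum_scal. apply zsum_le. intros x _. pose proof (H x). apply Rabs_le_inv in H0. lra.
  - apply zsum_le. intros x _. pose proof (H x). apply Rabs_le_inv in H0. lra.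
Qed.

Lemma step_bound K g h : (forall i j, Rabs (g i j) <= h i j) ->
  Rabs (S2 (S K) g - S2 K g) <= S2 (S K) h - S2 K h.
Proof.
  intros H. rewrite (box_S K g), (box_S K h). unfold S2.
  rewrite <- zsum_minus, <- zsum_minus.
  apply zsum_abs. intros i. rewrite <- zsum_minus, <- zsum_minus.
  apply zsum_abs. intros j. destruct (_ && _)%bool.
  - replace (g i j - g i j) with 0 by ring. replace (h i j - h i j) with 0 by ring. rewrite Rabs_R0; lra.
  - replace (g i j - 0) with (g i j) by ring. replace (h i j - 0) with (h i j) by ring. auto.
Qed.

Lemma S2_mono K h : (forall i j, 0 <= h i j) -> S2 K h <= S2 (S K) h.
Proof.
  intros H. unfold S2. eapply Rle_trans. apply zsum_le. intros i _. apply zsum_mono. auto.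
  apply zsum_mono. intros; apply zsum_nonneg; auto.
Qed.

Lemma tele_bound K p g h : (forall i j, Rabs (g i j) <= h i j) ->
  Rabs (S2 (K + p) g - S2 K g) <= S2 (K + p) h - S2 K h.
Proof.
  intros H. induction p as [|p IH].
  - rewrite Nat.add_0_r. replace (S2 K g - S2 K g) with 0 by ring. rewrite Rabs_R0. lra.
  - replace (K + S p)%nat with (S (K + p)) by lia.
    pose proof (step_bound (K + p) g h H).
    replace (S2 (S (K + p)) g - S2 K g) with ((S2 (S (K + p)) g - S2 (K + p) g) + (S2 (K + p) g - S2 K g)) by ring.
    eapply Rle_trans. apply Rabs_triang. lra.
Qed.

Lemma conv_real g h X : (forall i j, Rabs (g i j) <= h i j) -> (forall K, S2 K h <= X) ->
  exists l, Un_cv (fun K => S2 K g) l.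
Proof.
  intros H HX.
  assert (h0 : forall i j, 0 <= h i j) by (intros i j; pose proof (H i j); pose proof (Rabs_pos (g i j)); lra).
  destruct (growing_cv (fun K => S2 K h)) as [lh Hlh].
  { intros K. apply S2_mono; auto. }
  { exists X. intros y [K ->]. auto. }
  pose proof (CV_Cauchy _ (exist _ lh Hlh)) as Hc.
  assert (Cauchy_crit (fun K => S2 K g)).
  { intros eps Heps. destruct (Hc eps Heps) as [N HN]. exists N. intros n m Hn Hm.
    unfold R_dist in *. specialize (HN n m Hn Hm).
    destruct (Nat.le_ge_cases n m) as [Hnm|Hnm].
    - replace m with (n + (m - n))%nat in * by lia.
      pose proof (tele_bound n (m - n) g h H). rewrite Rabs_minus_sym.
      rewrite Rabs_minus_sym in HN. eapply Rle_lt_trans; [apply H0|].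
      eapply Rle_lt_trans; [apply Rle_abs|]. auto.
    - replace n with (m + (n - m))%nat in * by lia.
      pose proof (tele_bound m (n - m) g h H).
      eapply Rle_lt_trans; [apply H0|].
      eapply Rle_lt_trans; [apply Rle_abs|]. auto. }
  destruct (R_complete _ H0) as [l Hl]. exists l; auto.
Qed.

Lemma cv_le u l X : Un_cv u l -> (forall K, u K <= X) -> l <= X.
Proof.
  intros Hu HX. destruct (Rle_dec l X) as [h|h]; auto.
  exfalso. destruct (Hu (l - X)) as [N HN]. lra.
  specialize (HN N (Nat.le_refl N)). specialize (HX N). unfold R_dist in HN.
  apply Rabs_def2 in HN. lra.
Qed.

Lemma cv_list (u : nat -> Z -> R) (lim : Z -> R) (l : list Z) :
  (forall n, In n l -> Un_cv (fun K => u K n) (lim n)) ->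
  Un_cv (fun K => fold_right Rplus 0 (map (u K) l)) (fold_right Rplus 0 (map lim l)).
Proof.
  induction l as [|a l IH]; intros H; simpl.
  - intros eps Heps. exists 0%nat. intros. unfold R_dist. rewrite Rminus_0_r, Rabs_R0. lra.
  - apply CV_plus. apply H; left; auto. apply IH. intros; apply H; right; auto.
Qed.

Lemma cv_zsum (u : nat -> Z -> R) (lim : Z -> R) L :
  (forall n, Un_cv (fun K => u K n) (lim n)) ->
  Un_cv (fun K => zsum L (u K)) (zsum L lim).
Proof. intros H. unfold zsum. apply cv_list. auto. Qed.

Lemma cv_const c : Un_cv (fun _ : nat => c) c.
Proof. intros eps Heps. exists 0%nat. intros. unfold R_dist. rewrite Rminus_eq_0, Rabs_R0. lra. Qed.

Lemma cv_Cnorm2 (u : nat -> Cx) z : Cx_cv u z -> Un_cv (fun K => Cnorm2 (u K)) (Cnorm2 z).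
Proof.
  intros [H1 H2]. unfold Cnorm2. apply CV_plus; apply CV_mult; auto.
Qed.

Lemma cv_Csub (u v : nat -> Cx) z w : Cx_cv u z -> Cx_cv v w -> Cx_cv (fun K => Csub (u K) (v K)) (Csub z w).
Proof.
  intros [H1 H2] [H3 H4]. unfold Csub, Cadd, Copp. split; simpl.
  - apply CV_plus; auto. apply CV_opp; auto.
  - apply CV_plus; auto. apply CV_opp; auto.
Qed.

Lemma FF_pt s K v A n : 0 <= s -> l2s_le s v A -> FF s K v v v n <= 9 * A ^ 3.
Proof.
  intros Hs Hv.
  assert (A0 : 0 <= A) by (destruct Hv; auto).
  pose proof (FF_sum s K (Z.to_nat (Z.abs n)) v v v A A A Hs Hv Hv Hv).
  assert (FF s K v v v n ^ 2 <= zsum (Z.to_nat (Z.abs n)) (fun n => FF s K v v v n ^ 2)).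
  { apply (zsum_single _ (fun n => FF s K v v v n ^ 2)). intros; apply pow2_ge_0. lia. }
  pose proof (FF_nonneg s K v v v n).
  assert (FF s K v v v n ^ 2 <= (9 * A ^ 3) ^ 2) by (replace ((9 * A ^ 3) ^ 2) with (81 * (A ^ 2 * A ^ 2 * A ^ 2)) by ring; lra).
  assert (0 <= 9 * A ^ 3) by (pose proof (pow_le A 3 A0); lra).
  destruct (Rle_dec (FF s K v v v n) (9 * A ^ 3)); auto. nra.
Qed.

Lemma U_bound s M t v A n K : 0 <= s -> 0 <= M -> l2s_le s v A -> (0 < n)%Z ->
  S2 K (fun i j => cabs (NR_term M t v n i j)) <= 4 * M * (9 * A ^ 3).
Proof.
  intros Hs M0 Hv Hn.
  apply Rle_trans with (4 * M * FF s K v v v n).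
  2:{ apply Rmult_le_compat_l. lra. apply FF_pt; auto. }
  unfold S2, FF. rewrite <- zsum_scal. apply zsum_le; intros i _.
  rewrite <- zsum_scal. apply zsum_le; intros j _.
  eapply Rle_trans; [|apply (term_single s M t); auto].
  pose proof (jbr_ge1 s n Hs). pose proof (cabs_nonneg (NR_term M t v n i j)).
  assert (1 <= sqrt (jbr2s s n)) by (rewrite <- sqrt_1; apply sqrt_le_1_alt; auto).
  nra.
Qed.

Lemma exists_lim s M t v A n : 0 <= s -> 0 <= M -> l2s_le s v A -> (0 < n)%Z ->
  exists z, Cx_cv (fun K => NR_partial M t v n K) z.
Proof.
  intros Hs M0 Hv Hn.
  destruct (conv_real (fun i j => fst (NR_term M t v n i j)) (fun i j => cabs (NR_term M t v n i j))
     (4 * M * (9 * A ^ 3))) as [l1 H1].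
  { intros; apply fst_le_cabs. } { intros; apply (U_bound s); auto. }
  destruct (conv_real (fun i j => snd (NR_term M t v n i j)) (fun i j => cabs (NR_term M t v n i j))
     (4 * M * (9 * A ^ 3))) as [l2 H2].
  { intros; apply snd_le_cabs. } { intros; apply (U_bound s); auto. }
  exists (l1, l2). split; simpl.
  - eapply Un_cv_ext; [|apply H1]. intros K. unfold NR_partial, S2. rewrite fst_Czsum.
    apply zsum_ext'. intros; rewrite fst_Czsum; auto.
  - eapply Un_cv_ext; [|apply H2]. intros K. unfold NR_partial, S2. rewrite snd_Czsum.
    apply zsum_ext'. intros; rewrite snd_Czsum; auto.
Qed.

Lemma Q_cv M T w N t n : is_NR M T w N -> 0 <= t <= T ->
  Cx_cv (fun K => Q M t K (w t) n) (N t n).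
Proof.
  intros HN Ht. destruct (HN t Ht n) as [H1 H2]. unfold Q.
  destruct (0 <? n)%Z eqn:E.
  - apply H1. apply Z.ltb_lt; auto.
  - rewrite H2 by (apply Z.ltb_ge; auto). split; apply cv_const.
Qed.

Theorem lemma3p2 (s : R) (hs : 0 <= s) :
  exists C : R, 0 < C /\
  forall M T : R, 0 < M -> 0 < T ->
    (forall w, in_CTl2s s T w -> exists N, is_NR M T w N) /\
    (forall w N A, in_CTl2s s T w -> is_NR M T w N ->
       (forall t, 0 <= t <= T -> l2s_le s (w t) A) ->
       forall t, 0 <= t <= T -> l2s_le s (N t) (C * M * A ^ 3)) /\
    (forall w w' N N' A B D, in_CTl2s s T w -> in_CTl2s s T w' ->
       is_NR M T w N -> is_NR M T w' N' ->
       (forall t, 0 <= t <= T -> l2s_le s (w t) A) ->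
       (forall t, 0 <= t <= T -> l2s_le s (w' t) B) ->
       (forall t, 0 <= t <= T -> l2s_le s (fun n => Csub (w t n) (w' t n)) D) ->
       forall t, 0 <= t <= T ->
         l2s_le s (fun n => Csub (N t n) (N' t n)) (C * M * (A ^ 2 + B ^ 2) * D)).
Proof.
  exists 63. split; [lra|]. intros M T HM HT. split; [|split].
  - intros w [Hw _].
    assert (H : forall p : R * Z, exists z : Cx,
      (0 <= fst p <= T -> (0 < snd p)%Z -> Cx_cv (fun K => NR_partial M (fst p) (w (fst p)) (snd p) K) z) /\
      ((snd p <= 0)%Z -> z = C0)).
    { intros [t n]; simpl.
      destruct (Z_lt_le_dec 0 n) as [hn|hn].
      - destruct (Rle_dec 0 t) as [h1|h1]; [destruct (Rle_dec t T) as [h2|h2]|].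
        + destruct (Hw t (conj h1 h2)) as [A HA].
          destruct (exists_lim s M t (w t) A n hs ltac:(lra) HA hn) as [z Hz].
          exists z. split; auto. intros; lia.
        + exists C0. split; intros; [lra|lia].
        + exists C0. split; intros; [lra|lia].
      - exists C0. split; auto. intros; lia. }
    exists (fun t n => proj1_sig (constructive_indefinite_description _ (H (t, n)))).
    intros t Ht n.
    destruct (proj2_sig (constructive_indefinite_description _ (H (t, n)))) as [H1 H2].
    simpl in H1, H2. split; auto.
  - intros w N A Hw HN HA t Ht.
    assert (A0 : 0 <= A) by (destruct (HA t Ht); auto).
    split. { pose proof (pow_le A 3 A0). apply Rmult_le_pos; [lra|auto]. }
    intros L.
    apply Rle_trans with (1296 * M ^ 2 * (A ^ 2 * A ^ 2 * A ^ 2)).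
    + apply (cv_le (fun K => zsum L (fun n => jbr2s s n * Cnorm2 (Q M t K (w t) n)))).
      * apply cv_zsum. intros n. apply (CV_mult (fun _ => jbr2s s n)). apply cv_const.
        apply cv_Cnorm2. apply (Q_cv M T w N t n HN Ht).
      * intros K. apply main_single; auto. lra.
    + replace ((63 * M * A ^ 3) ^ 2) with (3969 * (M ^ 2 * (A ^ 2 * A ^ 2 * A ^ 2))) by ring.
      assert (0 <= M ^ 2 * (A ^ 2 * A ^ 2 * A ^ 2)) by (pose proof (pow2_ge_0 M); pose proof (pow2_ge_0 A); apply Rmult_le_pos; [lra|]; repeat apply Rmult_le_pos; lra).
      lra.
  - intros w w' N N' A B D Hw Hw' HN HN' HA HB HD t Ht.
    assert (A0 : 0 <= A) by (destruct (HA t Ht); auto).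
    assert (B0 : 0 <= B) by (destruct (HB t Ht); auto).
    assert (D0 : 0 <= D) by (destruct (HD t Ht); auto).
    split. { assert (0 <= A ^ 2 + B ^ 2) by (pose proof (pow2_ge_0 A); pose proof (pow2_ge_0 B); lra).
             repeat apply Rmult_le_pos; lra. }
    intros L.
    apply Rle_trans with (3888 * M ^ 2 * (D ^ 2 * A ^ 2 * A ^ 2 + B ^ 2 * D ^ 2 * A ^ 2 + B ^ 2 * B ^ 2 * D ^ 2)).
    + apply (cv_le (fun K => zsum L (fun n => jbr2s s n * Cnorm2 (Csub (Q M t K (w t) n) (Q M t K (w' t) n))))).
      * apply cv_zsum. intros n. apply (CV_mult (fun _ => jbr2s s n)). apply cv_const.
        apply cv_Cnorm2. apply cv_Csub. apply (Q_cv M T w N t n HN Ht). apply (Q_cv M T w' N' t n HN' Ht).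
      * intros K. apply main_diff; auto. lra.
    + assert (0 <= A^2*B^2) by (apply Rmult_le_pos; apply pow2_ge_0).
      assert (0 <= A^4) by (apply pow_le; lra). assert (0 <= B^4) by (apply pow_le; lra).
      assert (0 <= M^2 * D^2) by (apply Rmult_le_pos; apply pow2_ge_0).
      replace ((63 * M * (A ^ 2 + B ^ 2) * D) ^ 2) with (3969 * (M^2 * D^2) * (A^4 + 2 * (A^2*B^2) + B^4)) by ring.
      replace (3888 * M ^ 2 * (D ^ 2 * A ^ 2 * A ^ 2 + B ^ 2 * D ^ 2 * A ^ 2 + B ^ 2 * B ^ 2 * D ^ 2))
        with (3888 * (M^2 * D^2) * (A^4 + (A^2*B^2) + B^4)) by ring.
      nra.
Qed.
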